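(* Let $k\ge1$ and $n$ be integers, and suppose that neither $0$ nor $k-1$ lies in the tail of $G(n,k)$. Then $G(n,k)$ has a cycle $C'$ containing both $k-1$ and $(n-3)_{k+1}$, and a cycle $C''$ containing both $0$ and $(n-1)_{k+1}$. Moreover, $C'$ is longer (has more edges) than the tail.
   Context: For an integer $\ell$, $\ell_k$ and $\ell_{k+1}$ denote the least nonnegative residues of $\ell$ modulo $k$ and $k+1$. $G(n,k)$ is the directed graph on vertices $0,1,\dots,k$ whose edges are exactly the $k$ edges $(i+n-2)_{k+1}\to(i+n-1)_k$, $1\le i\le k$; a loop $a\to a$ counts as a cycle of length $1$. Vertex $k$ has in-degree $0$, vertex $(n-2)_{k+1}$ has out-degree $0$, and all other vertices have in- and out-degree $1$, so $G(n,k)$ is a disjoint union of directed cycles and one directed path, the tail, from $k$ to $(n-2)_{k+1}$ (of length $0$ if $k=(n-2)_{k+1}$). Lengths are numbers of edges. *)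

(* Defs.v *)
From mathcomp Require Import all_boot all_order all_algebra.
Set Implicit Arguments. Unset Strict Implicit. Unset Printing Implicit Defensive.
Import Order.TTheory GRing.Theory Num.Theory.

Definition res (l : int) (m : nat) : nat := absz (l %% (m%:Z))%Z.

(* Edge relation of G(n,k): a -> b iff for some 1 <= i <= k,
   a = (i+n-2)_{k+1} and b = (i+n-1)_k.  Vertices are the nats 0..k. *)
Definition Gedge (n : int) (k : nat) : rel nat :=
  fun a b => [exists i : 'I_k,
     (a == res ((i.+1)%:Z + n - 2)%R k.+1) && (b == res ((i.+1)%:Z + n - 1)%R k)].

(* A directed cycle of G(n,k): a nonempty sequence of distinct vertices
   c_0 -> c_1 -> ... -> c_{m-1} -> c_0 (a loop [:: a] means a -> a).
   Its length (number of edges) is size c. *)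
Definition is_Gcycle (n : int) (k : nat) (c : seq nat) : bool :=
  [&& c != [::], cycle (Gedge n k) c & uniq c].

(* The tail of G(n,k): the directed path k :: s from k to (n-2)_{k+1}
   (with distinct vertices).  Its length (number of edges) is size s. *)
Definition is_Gtail (n : int) (k : nat) (s : seq nat) : bool :=
  [&& path (Gedge n k) k s, last k s == res (n - 2)%R k.+1 & uniq (k :: s)].

(* Main.v *)
Require Import Defs.
From mathcomp Require Import all_boot all_order all_algebra zify.
Import Order.TTheory GRing.Theory Num.Theory.

Lemma res_nat (l : int) m : 0 < m -> Posz (res l m) = (l %% Posz m)%Z.
Proof.
move=> m0; rewrite /res gez0_abs // modz_ge0 //; by rewrite eqz_nat -lt0n.
Qed.

Lemma res_lt (l : int) m : 0 < m -> res l m < m.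
Proof.
move=> m0; have := ltz_pmod l (m0 : (0 < Posz m)%R).
by rewrite -res_nat // ltz_nat.
Qed.

Lemma resD (a : nat) (l : int) m : 0 < m -> res (Posz a + l)%R m = (a + res l m) %% m.
Proof.
move=> m0; apply/eqP; rewrite -eqz_nat res_nat // -modz_nat PoszD res_nat //.
by rewrite modzDmr.
Qed.

Lemma resDm (l : int) m : 0 < m -> res (l + Posz m)%R m = res l m.
Proof.
move=> m0; apply/eqP; rewrite -eqz_nat !res_nat //.
by rewrite modzDr.
Qed.

Definition m0 k n := res (n - 1)%R k.+1.
Definition idx k n a := (a + k.+1 - m0 k n) %% k.+1.
Definition F k n a := (idx k n a + res n k) %% k.
Definition valid k n a := (a <= k) && (idx k n a < k).

Lemma m0_lt k n : m0 k n < k.+1.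
Proof. exact: res_lt. Qed.

Lemma idx_lt k n a : idx k n a < k.+1.
Proof. by rewrite ltn_pmod. Qed.

Lemma idxK k n i : i <= k -> idx k n ((i + m0 k n) %% k.+1) = i.
Proof.
move=> ik; rewrite /idx -addnBA; last exact: ltnW (m0_lt k n).
rewrite modnDml -addnA subnKC; last exact: ltnW (m0_lt k n).
by rewrite modnDr modn_small.
Qed.

Lemma idxK' k n a : a <= k -> (idx k n a + m0 k n) %% k.+1 = a.
Proof.
move=> ak; rewrite /idx -addnBA; last exact: ltnW (m0_lt k n).
rewrite modnDml -addnA subnK; last exact: ltnW (m0_lt k n).
by rewrite modnDr modn_small.
Qed.

Lemma idx_inj k n a b : a <= k -> b <= k -> idx k n a = idx k n b -> a = b.
Proof. by move=> ak bk e; rewrite -(idxK' k n a ak) -(idxK' k n b bk) e. Qed.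

Lemma idxS k n a : a < k -> idx k n a.+1 = (idx k n a).+1 %% k.+1.
Proof.
move=> ak; rewrite /idx -!addnBA ?(ltnW (m0_lt k n)) //.
by rewrite -[in RHS]addn1 modnDml addSn addn1.
Qed.

Lemma edgeP k n a b : Gedge n k a b = valid k n a && (b == F k n a).
Proof.
apply/existsP/andP => [[i /andP[/eqP ea /eqP eb]] | [/andP[ak ik] /eqP eb]].
  have ea' : a = (i + m0 k n) %% k.+1.
    rewrite ea /m0 -resD //; congr res; lia.
  have ii : idx k n a = i by rewrite ea' idxK // ltnW.
  split; first by rewrite /valid ea' -ltnS ltn_pmod //= idxK // ltnW.
  have k0 : 0 < k := leq_ltn_trans (leq0n i) (ltn_ord i).
  rewrite /F ii eb -resD //.
  apply/eqP; congr res; lia.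
exists (Ordinal ik); apply/andP; split; apply/eqP => /=.
  rewrite -{1}(idxK' k n a ak) /m0 -resD //; congr res; lia.
have k0 : 0 < k := leq_ltn_trans (leq0n _) ik.
rewrite eb /F -resD //.
congr res; lia.
Qed.

Lemma S_idx k n : idx k n (res (n - 2)%R k.+1) = k.
Proof.
have -> : res (n - 2)%R k.+1 = (k + m0 k n) %% k.+1.
  by rewrite /m0 -resD // -(resDm (n - 2) k.+1) //; congr res; lia.
by rewrite idxK.
Qed.

Lemma v_idx k n : 0 < k -> idx k n (res (n - 3)%R k.+1) = k.-1.
Proof.
move=> k0; have -> : res (n - 3)%R k.+1 = (k.-1 + m0 k n) %% k.+1.
  by rewrite /m0 -resD // -(resDm (n - 3) k.+1) //; congr res; lia.
by rewrite idxK // leq_pred.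
Qed.

Lemma w_idx k n : idx k n (res (n - 1)%R k.+1) = 0.
Proof.
have -> : res (n - 1)%R k.+1 = (0 + m0 k n) %% k.+1.
  by rewrite add0n modn_small // m0_lt.
by rewrite idxK.
Qed.
Set Implicit Arguments. Unset Strict Implicit.

Lemma F_lt k n a : 0 < k -> F k n a < k.
Proof. by move=> k0; rewrite ltn_pmod. Qed.

Lemma iter_le k n x j : 0 < k -> x <= k -> iter j (F k n) x <= k.
Proof. by move=> k0 xk; case: j => //= j; rewrite ltnW // F_lt. Qed.

Lemma F_inj k n a b : valid k n a -> valid k n b -> F k n a = F k n b -> a = b.
Proof.
move=> /andP[ak ia] /andP[bk ib] /eqP; rewrite /F eqn_modDr !modn_small // => /eqP.
exact: idx_inj.
Qed.

Lemma Rback k u : u < k.+1 -> (u.+1 %% k.+1 + k) %% k.+1 = u.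
Proof.
move=> uk; rewrite modnDml addSn -addnS modnDr modn_small //.
Qed.

Lemma key k n x y : 0 < k -> valid k n x -> valid k n y ->
  idx k n y = (idx k n x + k) %% k.+1 -> F k n x = (F k n y).+1 %% k.
Proof.
move=> k0 /andP[xk ix] /andP[yk iy] e.
rewrite /F; move: e iy ix; case: (idx k n x) => [|j].
  by rewrite add0n modn_small // => ->; rewrite ltnn.
move=> e iy ix; move: e; rewrite addSn -addnS modnDr modn_small => [e|]; last by lia.
by rewrite e -[in RHS]addn1 modnDml; congr (_ %% _); lia.
Qed.

Lemma shiftF k n x y : 0 < k -> valid k n x -> valid k n y ->
  idx k n y = (idx k n x + k) %% k.+1 -> (F k n y).+1 != k ->
  idx k n (F k n y) = (idx k n (F k n x) + k) %% k.+1.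
Proof.
move=> k0 vx vy e ne.
have fy : F k n y < k by exact: F_lt.
have fy1 : (F k n y).+1 < k by rewrite ltn_neqAle ne fy.
rewrite (key k0 vx vy e) (modn_small fy1) idxS // Rback ?idx_lt //.
Qed.

Lemma pathF k n x m : (forall j, valid k n (iter j (F k n) x)) ->
  path (Gedge n k) x (traject (F k n) (F k n x) m).
Proof.
elim: m x => // m IH x hv /=; rewrite edgeP eqxx andbT.
rewrite (hv 0) /=; apply: IH => j; rewrite -iterSr; exact: hv.
Qed.

Lemma iter_cancel k n x d i : (forall j, valid k n (iter j (F k n) x)) ->
  iter i (F k n) (iter d (F k n) x) = iter i (F k n) x -> iter d (F k n) x = x.
Proof.
move=> hv; elim: i => // i IH; rewrite !iterS => e; apply: IH.
apply: F_inj e; last exact: hv.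
by rewrite -iterD; exact: hv.
Qed.

Lemma iter_mul k n x p q : iter p (F k n) x = x -> iter (q * p) (F k n) x = x.
Proof.
move=> hp; elim: q => // q IH; by rewrite mulSn iterD IH hp.
Qed.

Lemma Cyc k n x : 0 < k -> x <= k -> (forall j, valid k n (iter j (F k n) x)) ->
  exists C, [/\ is_Gcycle n k C, forall j, iter j (F k n) x \in C,
              0 < size C & iter (size C) (F k n) x = x].
Proof.
move=> k0 xk hv.
have ex : exists p, (0 < p) && (iter p (F k n) x == x).
  have : ~~ uniq (traject (F k n) x k.+2).
    apply/negP => U.
    have : size (traject (F k n) x k.+2) <= size (iota 0 k.+1).
      apply: uniq_leq_size U _ => y /trajectP[i _ ->].
      by rewrite mem_iota add0n ltnS iter_le.
    by rewrite size_traject size_iota ltnn.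
  case/(uniqPn x) => i [j [ij]]; rewrite size_traject => jk.
  rewrite !nth_traject ?(ltn_trans ij) // => e.
  exists (j - i); rewrite subn_gt0 ij /=; apply/eqP.
  apply: (iter_cancel (i := i)) => //; rewrite -iterD subnKC ?e //; exact: ltnW.
case: (ex_minnP ex) => p /andP[p0 /eqP hp] pmin.
exists (traject (F k n) x p); rewrite size_traject; split => //.
- rewrite /is_Gcycle; case: p p0 hp pmin => // p _ hp pmin.
  apply/and3P; split => //.
    rewrite /= (_ : rcons _ _ = traject (F k n) (F k n x) p.+1); first exact: pathF.
    by rewrite trajectSr -iterSr hp.
  apply/negPn/negP; case/(uniqPn x) => i [j [ij]]; rewrite size_traject => jk.
  rewrite !nth_traject ?(ltn_trans ij) // => e.
  have : iter (j - i) (F k n) x = x.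
    apply: (iter_cancel (i := i)) => //; rewrite -iterD subnKC ?e //; exact: ltnW.
  move/eqP => e2; have := pmin (j - i); rewrite subn_gt0 ij e2 => /(_ isT).
  move=> h; lia.
- move=> j; apply/trajectP; exists (j %% p); first by rewrite ltn_pmod.
  by rewrite {1}(divn_eq j p) addnC iterD iter_mul.
Qed.

Lemma tail_edge k n s i : is_Gtail n k s -> i < size s ->
  valid k n (nth k (k :: s) i) /\ nth k (k :: s) i.+1 = F k n (nth k (k :: s) i).
Proof.
case/and3P => /(pathP k) P _ _ /P; rewrite edgeP => /andP[V /eqP E]; by split.
Qed.

Lemma tail_iter k n s i : is_Gtail n k s -> i <= size s ->
  nth k (k :: s) i = iter i (F k n) k.
Proof.
move=> Ht; elim: i => // i IH lt; case: (tail_edge Ht lt) => _ ->.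
by rewrite IH // ltnW.
Qed.

Lemma tail_last k n s : is_Gtail n k s -> nth k (k :: s) (size s) = res (n - 2)%R k.+1.
Proof. by case/and3P => _ /eqP <- _; rewrite (last_nth k). Qed.

Lemma tailB k n s j x : 0 < k -> is_Gtail n k s -> x <= k ->
  (forall i, i < j -> valid k n (iter i (F k n) x)) ->
  idx k n (iter j (F k n) x) = k -> exists2 i, i <= size s & x = nth k (k :: s) i.
Proof.
move=> k0 Ht; elim: j x => [|j IH] x xk hv.
  move=> /= e; have ex : x = res (n - 2)%R k.+1.
    apply: (idx_inj k n x _ xk); first by rewrite -ltnS res_lt.
    by rewrite e S_idx.
  by exists (size s); rewrite // (tail_last Ht).
rewrite iterSr => e.
case: (IH (F k n x)) => //; first by rewrite ltnW // F_lt.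
  by move=> i ij; rewrite -iterSr; apply: hv.
case=> [|i] le.
  by rewrite /= => e2; have := F_lt n x k0; rewrite e2 ltnn.
case: (tail_edge Ht le) => vt -> e2.
exists i; first exact: ltnW.
by apply: F_inj e2 => //; exact: (hv 0).
Qed.

Lemma orbit_valid k n s x : 0 < k -> is_Gtail n k s -> x <= k -> x \notin k :: s ->
  forall j, valid k n (iter j (F k n) x).
Proof.
move=> k0 Ht xk xn.
suff H : forall j i, i < j -> valid k n (iter i (F k n) x) by move=> j; exact: (H j.+1).
elim=> // j IH i; rewrite ltnS leq_eqVlt => /orP[/eqP -> | ]; last exact: IH.
rewrite /valid iter_le //=.
have := idx_lt k n (iter j (F k n) x); rewrite ltnS leq_eqVlt => /orP[/eqP e|//].
case: (tailB k0 Ht xk IH e) => i0 le ex.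
by move: xn; rewrite ex mem_nth.
Qed.

Lemma zero_of k u : u < k.+1 -> (u + k) %% k.+1 = k -> u = 0.
Proof.
case: u => // u uk; rewrite addSn -addnS modnDr modn_small => [e|]; lia.
Qed.

Theorem lemma3p8 (k : nat) (n : int) (s : seq nat) :
  1 <= k ->
  is_Gtail n k s ->
  0 \notin k :: s ->
  k.-1 \notin k :: s ->
  exists C' C'' : seq nat,
    [/\ is_Gcycle n k C', k.-1 \in C', res (n - 3)%R k.+1 \in C' & size s < size C'] /\
    [/\ is_Gcycle n k C'', 0 \in C'' & res (n - 1)%R k.+1 \in C''].
Proof.
move=> k0 Ht H0 H1.
have vk1 := orbit_valid k0 Ht (leq_pred k) H1.
have v0 := orbit_valid k0 Ht (leq0n k) H0.
have tin : forall i, i <= size s -> nth k (k :: s) i \in k :: s.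
  by move=> i le; rewrite mem_nth.
have par1 : forall i, i <= size s ->
    idx k n (iter i (F k n) k.-1) = (idx k n (nth k (k :: s) i) + k) %% k.+1.
  elim=> [_|i IH lt].
    rewrite /=; have e : idx k n k = (idx k n k.-1).+1 %% k.+1.
      by rewrite -idxS ?prednK // ltn_predL.
    by rewrite e Rback // idx_lt.
  case: (tail_edge Ht lt) => vt et.
  have IH' := IH (ltnW lt).
  rewrite et iterS; apply: (shiftF k0 vt (vk1 i) IH').
  apply/eqP => h; have := key k0 vt (vk1 i) IH'; rewrite h modnn -et => e0.
  by move: H0; rewrite -e0 tin.
have par2 : forall i, i <= size s ->
    idx k n (nth k (k :: s) i) = (idx k n (iter i (F k n) 0) + k) %% k.+1.
  elim=> [_|i IH lt].
    rewrite /= /idx modnDml; congr (_ %% _); have := m0_lt k n; lia.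
  case: (tail_edge Ht lt) => vt et.
  have IH' := IH (ltnW lt).
  rewrite et iterS; apply: (shiftF k0 (v0 i) vt IH').
  apply/eqP => h; move: H1.
  have -> : k.-1 = nth k (k :: s) i.+1 by rewrite et; lia.
  by rewrite tin.
case: (Cyc k0 (leq_pred k) vk1) => C1 [G1 M1 P1 S1].
case: (Cyc k0 (leq0n k) v0) => C2 [G2 M2 P2 S2].
exists C1, C2; split; split => //.
- exact: (M1 0).
- have -> : res (n - 3)%R k.+1 = iter (size s) (F k n) k.-1; last exact: M1.
  apply: (idx_inj k n); first by rewrite -ltnS res_lt.
    exact: iter_le k0 (leq_pred k).
  rewrite v_idx // par1 // (tail_last Ht) S_idx.
  rewrite (_ : k + k = k.-1 + k.+1); last by lia.
  by rewrite modnDr modn_small //; lia.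
- rewrite ltnNge; apply/negP => le.
  have A := par1 _ le; rewrite S1 in A.
  have B := par1 0 (leq0n _); rewrite /= in B.
  move: A; rewrite B => /eqP; rewrite eqn_modDr !modn_small ?idx_lt // => /eqP e.
  have tq : nth k (k :: s) (size C1) = k.
    apply: (idx_inj k n) => //.
    by rewrite (tail_iter Ht le) iter_le.
  case/and3P: Ht => _ _ U.
  have := nth_uniq k (i := size C1) (j := 0) _ _ U; rewrite tq /= eqxx.
  rewrite /= !ltnS le => /(_ isT isT) /esym /eqP.
  by move=> e0; move: P1; rewrite e0.
- exact: (M2 0).
- have -> : res (n - 1)%R k.+1 = iter (size s) (F k n) 0; last exact: M2.
  apply: (idx_inj k n); first by rewrite -ltnS res_lt.
    exact: iter_le k0 (leq0n k).
  rewrite w_idx; apply/esym/(zero_of (idx_lt _ _ _)).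
  by rewrite -par2 // (tail_last Ht) S_idx.
Qed.
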